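(* If $X$ is a connected weighted bipartite graph whose adjacency matrix $A(X)$ is nonsingular, then no vertex of $X$ is sedentary.
   Context: Graphs are simple, connected, undirected, with nonzero real edge weights; $A(X)$ is the weighted adjacency matrix and $U(t)=e^{itA(X)}$. A vertex $u$ is sedentary if $\inf_{t>0}|U(t)_{u,u}|\ge C$ for some $0<C\le1$, and not sedentary if this infimum is $0$. *)

(* Defs.v *)
From HB Require Import structures.
From mathcomp Require Import all_boot all_order all_algebra.
From mathcomp Require Import all_classical all_reals all_analysis.
Set Implicit Arguments. Unset Strict Implicit. Unset Printing Implicit Defensive.
Import Order.TTheory GRing.Theory Num.Theory.
Import numFieldNormedType.Exports.
Local Open Scope ring_scope.

(* A weighted graph on the vertex set 'I_n is given by its weighted adjacency
   matrix A : real symmetric, zero diagonal (simple: no loops); the edges are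
   the pairs {i,j} with A i j != 0, the weight of the edge being A i j. *)
Definition weighted_adjacency (R : realType) (n : nat) (A : 'M[R]_n) : Prop :=
  A^T = A /\ forall i, A i i = 0.

Definition adj (R : realType) (n : nat) (A : 'M[R]_n) : rel 'I_n :=
  fun i j => A i j != 0.

Definition connected_graph (R : realType) (n : nat) (A : 'M[R]_n) : Prop :=
  forall i j : 'I_n, connect (adj A) i j.

Definition bipartite_graph (R : realType) (n : nat) (A : 'M[R]_n) : Prop :=
  exists f : 'I_n -> bool, forall i j, adj A i j -> f i != f j.

(* U(t) = exp(i t A) = \sum_k (i t)^k A^k / k!.  Its (u,u) entry has
   real part  \sum_k [k even] (-1)^(k/2) t^k (A^k)_{uu} / k!
   and imaginary part \sum_k [k odd] (-1)^((k-1)/2) t^k (A^k)_{uu} / k!. *)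
Definition U_re (R : realType) (n : nat) (A : 'M[R]_n) (t : R) (u : 'I_n) : R :=
  limn (series (fun k : nat =>
    if odd k then 0 else (-1) ^+ k./2 * t ^+ k / (k`!)%:R * (A ^+ k) u u)).

Definition U_im (R : realType) (n : nat) (A : 'M[R]_n) (t : R) (u : 'I_n) : R :=
  limn (series (fun k : nat =>
    if odd k then (-1) ^+ k./2 * t ^+ k / (k`!)%:R * (A ^+ k) u u else 0)).

Definition U_abs (R : realType) (n : nat) (A : 'M[R]_n) (t : R) (u : 'I_n) : R :=
  Num.sqrt (U_re A t u ^+ 2 + U_im A t u ^+ 2).

Definition sedentary (R : realType) (n : nat) (A : 'M[R]_n) (u : 'I_n) : Prop :=
  exists C : R, 0 < C <= 1 /\ forall t : R, 0 < t -> C <= U_abs A t u.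

(* Main.v *)
Require Import Defs.
From HB Require Import structures.
From mathcomp Require Import all_boot all_order all_algebra.
From mathcomp Require Import all_classical all_reals all_analysis.
From mathcomp Require Import complex.
From mathcomp Require Import ring lra.
Import Order.TTheory GRing.Theory Num.Theory.
Import numFieldNormedType.Exports.
Local Open Scope classical_set_scope.
Local Open Scope ring_scope.

Section An.
Variable R : realType.

Lemma cos_sum2 (x c : R) : cos x + cos (x + c) = 2 * cos (c / 2) * cos (x + c / 2).
Proof.
have e1 : cos x = cos ((x + c/2) - c/2) by rewrite addrK.
have e2 : cos (x + c) = cos ((x + c/2) + c/2) by rewrite -addrA -splitr.
rewrite e1 e2; set y := x + c/2; set d := c/2; rewrite cosB cosD; ring.
Qed.

Lemma cos_sum_nonpos (m : nat) : forall (a l p : nat -> R),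
  (forall j, (j < m)%N -> l j != 0) -> forall t0,
  exists t, t0 <= t /\ \sum_(j < m) a j * cos (l j * t + p j) <= 0.
Proof.
elim: m => [|m IH] a l p hl t0.
  by exists t0; rewrite big_ord0.
have lm0 : l m != 0 by apply: hl.
pose h := if 0 < l m then pi / l m else - (pi / l m).
have hpos : 0 < h.
  rewrite /h; case: ifPn => H; first by rewrite divr_gt0 ?pi_gt0.
  have Hn : l m < 0 by rewrite lt_neqAle lm0 leNgt.
  by rewrite oppr_gt0 pmulr_rlt0 ?pi_gt0 // invr_lt0.
pose a' j := 2 * cos (l j * h / 2) * a j.
pose p' j := p j + l j * h / 2.
have [t [ht hs]] := IH a' l p' (fun j hj => hl j (ltnW hj)) t0.
have key : \sum_(j < m.+1) a j * cos (l j * t + p j) +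
           \sum_(j < m.+1) a j * cos (l j * (t + h) + p j) =
           \sum_(j < m) a' j * cos (l j * t + p' j).
  rewrite -big_split /= big_ord_recr /=.
  have -> : a m * cos (l m * t + p m) + a m * cos (l m * (t + h) + p m) = 0.
    have E : l m * (t + h) + p m = (l m * t + p m) + l m * h by ring.
    rewrite E -mulrDr cos_sum2.
    have -> : cos (l m * h / 2) = 0.
      rewrite /h; case: ifPn => H.
      - have -> : l m * (pi / l m) / 2 = pi / 2 by field.
        exact: cos_pihalf.
      - have -> : l m * - (pi / l m) / 2 = - (pi / 2) by field.
        by rewrite cosN cos_pihalf.
    by rewrite mulr0 mul0r mulr0.
  rewrite addr0; apply: eq_bigr => j _.
  have E : l j * (t + h) + p j = (l j * t + p j) + l j * h by ring.
  rewrite E -mulrDr cos_sum2 /a' /p'.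
  have -> : l j * t + p j + l j * h / 2 = l j * t + (p j + l j * h / 2) by ring.
  ring.
have : (\sum_(j < m.+1) a j * cos (l j * t + p j) <= 0) \/
       (\sum_(j < m.+1) a j * cos (l j * (t + h) + p j) <= 0).
  case: (lerP (\sum_(j < m.+1) a j * cos (l j * t + p j)) 0) => H; first by left.
  right; move: hs; rewrite -key; lra.
case=> H; first by exists t; split.
exists (t + h); split => //; lra.
Qed.
Lemma cont_sum m (w l : nat -> R) : continuous (fun x : R => \sum_(j<m) w j * cos (l j * x)).
Proof.
elim: m => [|m IH].
  have -> : (fun x : R => \sum_(j<0) w j * cos (l j * x)) = cst 0.
    by apply/funext => y; rewrite big_ord0.
  exact: cst_continuous.
have -> : (fun x : R => \sum_(j<m.+1) w j * cos (l j * x)) =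
   (fun x => \sum_(j<m) w j * cos (l j * x)) + (cst (w m) \* (cos \o (fun x => l m * x))).
  by apply/funext => y; rewrite big_ord_recr.
move=> x; apply: continuousD; first exact: IH.
apply: continuousM; first exact: cst_continuous.
apply: continuous_comp; last exact: continuous_cos.
change ({for x, continuous (cst (l m) \* (@id R))}).
apply: continuousM; first exact: cst_continuous.
exact: cvg_id.

Qed.

Lemma cos_sum_zero m (w l : nat -> R) : (forall j, (j < m)%N -> l j != 0) ->
  0 < \sum_(j<m) w j ->
  exists c, 0 < c /\ \sum_(j<m) w j * cos (l j * c) = 0.
Proof.
move=> hl hw.
have [t [t1 ht]] := @cos_sum_nonpos m w l (fun=> 0) hl 1.
pose f x := \sum_(j<m) w j * cos (l j * x).
have ft : f t <= 0.
  by move: ht; rewrite /f; under eq_bigr do rewrite addr0.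
have f0 : f 0 = \sum_(j<m) w j.
  by rewrite /f; apply: eq_bigr => j _; rewrite mulr0 cos0 mulr1.
have t0 : 0 <= t by lra.
have [c cin fc] : exists2 c, c \in `[0, t] & f c = 0.
  apply: IVT => //; first exact/continuous_subspaceT/cont_sum.
  rewrite f0; apply/andP; split.
    by rewrite ge_min ft orbT.
  by rewrite le_max ltW.
exists c; split => //.
move: cin; rewrite in_itv /= => /andP[c0 _].
rewrite lt_neqAle c0 andbT; apply/eqP => ec.
by move: fc; rewrite -ec f0 => e; rewrite e ltxx in hw.
Qed.
End An.

Section Ser.
Variable R : realType.

Lemma series_sum_cvg m (F : nat -> nat -> R) (L : nat -> R) :
  (forall j, series (F j) @ \oo --> L j) ->
  series (fun k => \sum_(j<m) F j k) @ \oo --> \sum_(j<m) L j.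
Proof.
move=> hF; elim: m => [|m IH].
  have -> : series (fun k => \sum_(j<0) F j k) = cst 0.
    apply/funext => N; rewrite /series /=; apply: big1 => k _; exact: big_ord0.
  rewrite big_ord0; exact: cvg_cst.
have -> : (fun k => \sum_(j<m.+1) F j k) = (fun k => \sum_(j<m) F j k) + F m.
  by apply/funext => k; rewrite big_ord_recr.
rewrite seriesD big_ord_recr /=; exact: cvgD.
Qed.

Lemma cos_series (x : R) : series (cos_coeff x) @ \oo --> cos x.
Proof. rewrite cos.unlock; exact: is_cvg_series_cos_coeff. Qed.

Lemma scaled_cos_series (a x : R) :
  series (fun k => a * cos_coeff x k) @ \oo --> a * cos x.
Proof.
have -> : series (fun k => a * cos_coeff x k) = cst a \* series (cos_coeff x).
  by apply/funext => N; rewrite /series /= mulr_sumr.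
apply: cvgM; [exact: cvg_cst | exact: cos_series].
Qed.

Lemma U_re_rep n (A : 'M[R]_n) (u : 'I_n) (w l : nat -> R) (t : R) :
  (forall k, (A ^+ k) u u = \sum_(j<n) w j * l j ^+ k) ->
  limn (series (fun k : nat =>
    if odd k then 0 else (-1) ^+ k./2 * t ^+ k / (k`!)%:R * (A ^+ k) u u))
  = \sum_(j<n) w j * cos (l j * t).
Proof.
move=> hA.
have -> : (fun k : nat =>
    if odd k then 0 else (-1) ^+ k./2 * t ^+ k / (k`!)%:R * (A ^+ k) u u)
  = (fun k => \sum_(j<n) w j * cos_coeff (l j * t) k).
  apply/funext => k; rewrite hA /cos_coeff /=.
  case: (odd k) => /=.
    by rewrite big1 // => j _; rewrite !mul0r mulr0.
  rewrite mulr_sumr; apply: eq_bigr => j _; rewrite exprMn /exprz; ring.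
have := @series_sum_cvg n (fun j k => w j * cos_coeff (l j * t) k)
  (fun j => w j * cos (l j * t)) (fun j => scaled_cos_series _ _).
exact: cvg_lim.
Qed.
End Ser.

Section Bip.
Variable R : realType.

Lemma bip_pow n (A : 'M[R]_n) (f : 'I_n -> bool) :
  (forall i j, A i j != 0 -> f i != f j) ->
  forall k i j, (f i != f j) != odd k -> (A ^+ k) i j = 0.
Proof.
move=> hf; elim => [|k IH] i j hij.
  rewrite expr0 !mxE; case: eqP => // eij.
  by move: hij; rewrite eij eqxx.
rewrite exprS -mulmxE mxE; apply: big1 => l _.
have [->|Hil] := eqVneq (A i l) 0; first by rewrite mul0r.
rewrite IH ?mulr0 //.
move: (hf _ _ Hil) hij; rewrite /=.
by case: (f i); case: (f j); case: (f l); case: (odd k).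
Qed.

Lemma bip_odd0 n (A : 'M[R]_n) (f : 'I_n -> bool) :
  (forall i j, A i j != 0 -> f i != f j) ->
  forall k u, odd k -> (A ^+ k) u u = 0.
Proof. by move=> hf k u hk; apply: bip_pow hf _ _ _ _; rewrite eqxx hk. Qed.
End Bip.

Section Spec.
Variable R : realType.
Local Notation toC := (@real_complex_def R (Phant R)).
Lemma spec_rep n (A : 'M[R]_n) (u : 'I_n) : A^T = A -> A \in unitmx ->
  exists w l : 'I_n -> R, (forall j, l j != 0) /\
    forall k, (A ^+ k) u u = \sum_j w j * l j ^+ k.
Proof.
move=> hA hU.
pose Ac := map_mx toC A.
have Aherm : Ac \is hermsymmx.
  apply: realsym_hermsym.
    apply/is_hermitianmxP; rewrite expr0 scale1r map_mx_id // /Ac map_trmx hA //.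
  by apply/mxOverP => i j; rewrite mxE; apply/complex_realP; exists (A i j).
have /orthomx_spectralP hdec := hermitian_normalmx Aherm.
set P := spectralmx Ac in hdec; set d := spectral_diag Ac in hdec.
have Pu : P \in unitmx := spectral_unit Ac.
have Pinv : invmx P = (P ^t*)%sesqui := invmx_unitary (spectral_unitarymx Ac).
have dreal : d \is a realmx := hermitian_spectral_diag_real Aherm.
have pw : forall k, Ac ^+ k = invmx P *m diag_mx (\row_j (d 0 j ^+ k)) *m P.
  elim => [|k IH].
    have -> : diag_mx (\row_j (d 0 j ^+ 0)) = 1%:M.
      by apply/matrixP => i j; rewrite !mxE expr0.
    by rewrite mulmx1 mulVmx.
  rewrite exprS -mulmxE IH {1}hdec.
  rewrite -!mulmxA; congr (_ *m _).
  rewrite (mulmxA P) mulmxV // mul1mx mulmxA.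
  by rewrite mulmx_diag; congr (diag_mx _ *m _); apply/rowP => j; rewrite !mxE exprS.
have mapk : forall k, map_mx toC (A ^+ k) = Ac ^+ k.
  elim => [|k IH].
    by rewrite !expr0 map_mx1.
  by rewrite !exprS -!mulmxE map_mxM IH.
pose w j := complex.Re ((P ^t*)%sesqui u j * P j u).
pose l j := complex.Re (d 0 j).
have wE j : toC (w j) = (P ^t*)%sesqui u j * P j u.
  apply: RRe_real; rewrite !mxE -normCKC; exact: realX (normr_real _).
have lE j : toC (l j) = d 0 j.
  by apply: RRe_real; move/mxOverP: dreal; apply.
exists w, l; split.
  move=> j; apply/eqP => lj0.
  have : diag_mx d \in unitmx.
    have -> : diag_mx d = P *m Ac *m invmx P.
      by rewrite [in RHS]hdec !mulmxA mulmxV // mul1mx -mulmxA mulmxV // mulmx1.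
    by rewrite !unitmx_mul unitmx_inv Pu map_unitmx hU.
  rewrite unitmxE det_diag unitfE prodf_seq_neq0 => /allP /(_ j (mem_index_enum _)) /=.
  by rewrite -lE lj0 rmorph0 eqxx.
move=> k; apply: (@complexI R).
have -> : ((A ^+ k) u u)%:C%C = (map_mx toC (A ^+ k)) u u by rewrite mxE.
rewrite mapk pw mul_mx_diag !mxE rmorph_sum /=; apply: eq_bigr => j _.
rewrite !mxE.
have -> : toC (w j * l j ^+ k) = toC (w j) * toC (l j) ^+ k.
  by rewrite rmorphM rmorphXn.
rewrite wE lE Pinv; ring.
Qed.
End Spec.

Theorem corollary13 (R : realType) (n : nat) (A : 'M[R]_n) :
  weighted_adjacency A -> connected_graph A -> bipartite_graph A ->
  A \in unitmx ->
  forall u : 'I_n, ~ sedentary A u.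
Proof.
move=> [hT _] _ [f hf] hU u [C [/andP[C0 C1] hC]].
have [w [l [hl hrep]]] := @spec_rep R n A u hT hU.
pose w' (k : nat) : R := if insub k is Some j then w j else 0.
pose l' (k : nat) : R := if insub k is Some j then l j else 0.
have w'E (j : 'I_n) : w' j = w j by rewrite /w' valK.
have l'E (j : 'I_n) : l' j = l j by rewrite /l' valK.
have hrep' : forall k, (A ^+ k) u u = \sum_(j<n) w' j * l' j ^+ k.
  by move=> k; rewrite hrep; apply: eq_bigr => j _; rewrite w'E l'E.
have hl' : forall j, (j < n)%N -> l' j != 0.
  by move=> j hj; rewrite /l' insubT; apply: hl.
have sum1 : \sum_(j<n) w' j = 1.
  have := hrep' 0%N; rewrite expr0 mxE eqxx mulr1n => ->.
  by apply: eq_bigr => j _; rewrite expr0 mulr1.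
have sp : 0 < \sum_(j<n) w' j by rewrite sum1 ltr01.
have [c [c0 fc]] := @cos_sum_zero R n w' l' hl' sp.
have := hC c c0.
have hre : U_re A c u = 0 by rewrite /U_re (@U_re_rep R n A u w' l' c hrep') fc.
have him : U_im A c u = 0.
  rewrite /U_im.
  have -> : (fun k : nat => if odd k then (-1) ^+ k./2 * c ^+ k / (k`!)%:R * (A ^+ k) u u
       else 0) = (fun=> 0).
    apply/funext => k; case hk: (odd k) => //.
    by rewrite (@bip_odd0 R n A f hf) ?mulr0.
  have -> : series (fun=> (0:R)) = cst 0.
    by apply/funext => N; rewrite /series /=; apply: big1.
  exact: lim_cst.
rewrite /U_abs hre him expr0n /= addr0 sqrtr0 => hC0.
by move: (lt_le_trans C0 hC0); rewrite ltxx.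
Qed.
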